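(* Let $n\in\mathbb{N}$, $R_+>0$, $\delta\in(0,1)$, $\varepsilon:=\delta^2R_+^{-1}$ and $a,b>0$. On $\mathbb{R}^{2+n}$ with coordinates $(t_1,t_2,x)$, let $r=|x|$, $\tau=\sqrt{t_1^2+t_2^2}$, $u=\frac12(\tau-r)$, $v=\frac12(\tau+r)$, $f=-uv=\frac14(|x|^2-t_1^2-t_2^2)$, $\xi:=(1+\varepsilon u)(1-\varepsilon v)=1-\varepsilon r+\varepsilon^2f$, and \[ \zeta_{a,b;\varepsilon}:=\left\{\frac{f}{(1+\varepsilon u)(1-\varepsilon v)}\exp\left[\frac{2bf^{1/2}}{(1-\varepsilon u)^{1/2}(1+\varepsilon v)^{1/2}}\right]\right\}^{2a}. \] Let $x\in\mathbb{R}^n$ with $|x|\le R_+$, and $t,t_1,t_2\in\mathbb{R}$ with $t^2<t_1^2$ and $t_1^2+t_2^2<|x|^2$. Then \[ \frac{f}{\xi}(t,t_2,x)>\frac{f}{\xi}(t_1,t_2,x)\qquad\text{and}\qquad(\zeta_{a,b;\varepsilon}f)(t,t_2,x)>(\zeta_{a,b;\varepsilon}f)(t_1,t_2,x). \] *)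

(* Defs.v *)
From HB Require Import structures.
From mathcomp Require Import all_boot all_order all_algebra.
From mathcomp Require Import all_classical all_reals all_analysis.
Set Implicit Arguments. Unset Strict Implicit. Unset Printing Implicit Defensive.
Import Order.TTheory GRing.Theory Num.Theory.
Local Open Scope ring_scope.

Section Defs.
Variables (R : realType) (n : nat).

Definition enorm (x : 'rV[R]_n) : R := Num.sqrt (\sum_(i < n) x 0 i ^+ 2).

Definition rr (t1 t2 : R) (x : 'rV[R]_n) : R := enorm x.
Definition tau (t1 t2 : R) (x : 'rV[R]_n) : R := Num.sqrt (t1 ^+ 2 + t2 ^+ 2).
Definition uu (t1 t2 : R) (x : 'rV[R]_n) : R := (tau t1 t2 x - rr t1 t2 x) / 2.
Definition vv (t1 t2 : R) (x : 'rV[R]_n) : R := (tau t1 t2 x + rr t1 t2 x) / 2.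
Definition ff (t1 t2 : R) (x : 'rV[R]_n) : R := - (uu t1 t2 x * vv t1 t2 x).
Definition xi (eps : R) (t1 t2 : R) (x : 'rV[R]_n) : R :=
  (1 + eps * uu t1 t2 x) * (1 - eps * vv t1 t2 x).
Definition zeta (a b eps : R) (t1 t2 : R) (x : 'rV[R]_n) : R :=
  powR (ff t1 t2 x / xi eps t1 t2 x *
        expR (2 * b * Num.sqrt (ff t1 t2 x) /
              (Num.sqrt (1 - eps * uu t1 t2 x) * Num.sqrt (1 + eps * vv t1 t2 x))))
       (2 * a).
End Defs.

(* Main.v *)
Require Import Defs.
Set Warnings "-notation-overridden,-ambiguous-paths".
From HB Require Import structures.
From mathcomp Require Import all_boot all_order all_algebra.
From mathcomp Require Import all_classical all_reals all_analysis.
From mathcomp Require Import ring lra.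
Import Order.TTheory GRing.Theory Num.Theory.
Local Open Scope ring_scope.

Lemma frac_mono (R : realType) (c k F F1 : R) : 0 < c -> 0 <= k -> 0 < F1 -> F1 < F ->
  F1 / (c + k * F1) < F / (c + k * F).
Proof.
move=> c0 k0 F10 F1F.
have d1 : 0 < c + k * F1 by nra.
have d : 0 < c + k * F by nra.
rewrite ltr_pdivrMr // mulrAC ltr_pdivlMr //; nra.
Qed.

Lemma key (R : realType) (a b e r s s1 : R) :
  0 < a -> 0 < b -> 0 <= e -> e * r < 1 -> 0 <= s -> s < s1 -> s1 < r ->
  let u s := (s - r) / 2 in let v s := (s + r) / 2 in
  let F s := - (u s * v s) in
  let X s := (1 + e * u s) * (1 - e * v s) in
  let Z s := powR (F s / X s * expR (2 * b * Num.sqrt (F s) /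
              (Num.sqrt (1 - e * u s) * Num.sqrt (1 + e * v s)))) (2 * a) in
  F s / X s > F s1 / X s1 /\ Z s * F s > Z s1 * F s1.
Proof.
move=> a0 b0 e0 er s0 ss1 s1r u v F X Z.
have er0 : 0 <= e * r by apply: mulr_ge0; lra.
have e20 : 0 <= e ^+ 2 by exact: sqr_ge0.
have FE : forall s, F s = (r ^+ 2 - s ^+ 2) / 4 by move=> z; rewrite /F /u /v; field.
have XE : forall s, X s = (1 - e * r) + e ^+ 2 * F s
  by move=> z; rewrite /X /F /u /v; field.
have PE : forall s, (1 - e * u s) * (1 + e * v s) = (1 + e * r) + e ^+ 2 * F s
  by move=> z; rewrite /F /u /v; field.
have q1 : s1 ^+ 2 < r ^+ 2 by rewrite !expr2; apply: ltr_pM; lra.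
have q0 : s ^+ 2 < s1 ^+ 2 by rewrite !expr2; apply: ltr_pM; lra.
have F10 : 0 < F s1 by rewrite FE; lra.
have F1F : F s1 < F s by rewrite !FE; lra.
have eF1 : 0 <= e ^+ 2 * F s1 by apply: mulr_ge0; lra.
have eF : 0 <= e ^+ 2 * F s by apply: mulr_ge0; lra.
have HA : F s / X s > F s1 / X s1.
  rewrite !XE; apply: frac_mono => //; lra.
split => //.
have Hsq : forall z, z = s \/ z = s1 ->
  Num.sqrt (F z) / (Num.sqrt (1 - e * u z) * Num.sqrt (1 + e * v z)) =
  Num.sqrt (F z / ((1 + e * r) + e ^+ 2 * F z)).
  move=> z hz.
  have uz : 0 <= 1 - e * u z.
    have : 0 <= e * (r - z) by apply: mulr_ge0; [lra | case: hz => ->; lra].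
    rewrite /u; lra.
  rewrite -sqrtrM // PE sqrtrM; last by case: hz => ->; lra.
  by rewrite sqrtrV //; case: hz => ->; lra.
have HX1 : 0 < X s1 by rewrite XE; lra.
have HX : 0 < X s by rewrite XE; lra.
set E := fun z => expR (2 * b * Num.sqrt (F z) /
              (Num.sqrt (1 - e * u z) * Num.sqrt (1 + e * v z))).
have E1E : E s1 <= E s.
  rewrite /E ler_expR -!mulrA ler_pM2l; last lra.
  rewrite Hsq; last by right.
  rewrite Hsq; last by left.
  rewrite ler_pM2l // ler_sqrt; last first.
    apply: divr_ge0; lra.
  apply: ltW; apply: frac_mono => //; lra.
have H1 : 0 < F s1 / X s1 * E s1 by apply: mulr_gt0; [apply: divr_gt0 | exact: expR_gt0].
have H2 : F s1 / X s1 * E s1 < F s / X s * E s.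
  apply: (lt_le_trans (y := F s / X s * E s1)).
    by rewrite ltr_pM2r //; exact: expR_gt0.
  rewrite ler_pM2l; [exact: E1E | apply: divr_gt0 => //; lra].
have HZ : Z s1 < Z s.
  rewrite /Z; apply: gt0_ltr_powR => //; first lra.
  - by rewrite nnegrE; apply: ltW.
  - by rewrite nnegrE; apply: ltW; apply: lt_trans H2.
apply: ltr_pM; [exact/ltW/powR_gt0 | exact: ltW F10 | exact: HZ | exact: F1F].
Qed.

Theorem lemma4p4 (R : realType) (n : nat) (Rplus delta a b : R)
  (x : 'rV[R]_n) (t t1 t2 : R) :
  0 < Rplus -> 0 < delta < 1 -> 0 < a -> 0 < b ->
  enorm x <= Rplus ->
  t ^+ 2 < t1 ^+ 2 ->
  t1 ^+ 2 + t2 ^+ 2 < enorm x ^+ 2 ->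
  let eps := delta ^+ 2 / Rplus in
  ff t t2 x / xi eps t t2 x > ff t1 t2 x / xi eps t1 t2 x /\
  zeta a b eps t t2 x * ff t t2 x > zeta a b eps t1 t2 x * ff t1 t2 x.
Proof.
move=> R0 /andP[d0 d1] a0 b0 xR tt1 hr eps.
have e0 : 0 <= eps by rewrite /eps; apply: divr_ge0; [exact: sqr_ge0 | lra].
have r0 : 0 <= enorm x by rewrite /enorm; exact: sqrtr_ge0.
have er : eps * enorm x < 1.
  have : eps * enorm x <= delta ^+ 2.
    rewrite /eps mulrAC ler_pdivrMr // ler_pM2l //; exact: exprn_gt0.
  have : delta ^+ 2 < 1 by rewrite expr2 -[1](mulr1 1); apply: ltr_pM; lra.
  lra.
have sq : forall p q : R, 0 <= p -> 0 <= q -> p ^+ 2 < q ^+ 2 -> p < q.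
  by move=> p q p0 q0 h; rewrite -ltr_sqr // inE.
have s0 : 0 <= Num.sqrt (t ^+ 2 + t2 ^+ 2) by exact: sqrtr_ge0.
have s10 : 0 <= Num.sqrt (t1 ^+ 2 + t2 ^+ 2) by exact: sqrtr_ge0.
have p0 : forall z : R, 0 <= z ^+ 2 + t2 ^+ 2 by move=> z; apply: addr_ge0; exact: sqr_ge0.
have ss1 : Num.sqrt (t ^+ 2 + t2 ^+ 2) < Num.sqrt (t1 ^+ 2 + t2 ^+ 2).
  apply: sq => //; rewrite !sqr_sqrtr //; lra.
have s1r : Num.sqrt (t1 ^+ 2 + t2 ^+ 2) < enorm x.
  by apply: sq => //; rewrite [X in X < _]sqr_sqrtr.
exact: (@key R a b _ _ _ _ a0 b0 e0 er s0 ss1 s1r).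
Qed.
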